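(* A filter $D$ on $\omega$ is not nowhere dense if and only if there is a function $f\colon\omega\to{}^{\omega>}2$ such that for every $B\in D$ the set $f(B)$ is somewhere dense.
   Context: ${}^{\omega>}2$ is the set of finite $0$-$1$ sequences; for $\eta,\nu\in{}^{\omega>}2$, $\eta^\frown\nu$ is their concatenation and $\eta\unlhd\varrho$ means $\varrho$ extends $\eta$. A set $X\subseteq{}^{\omega>}2$ is somewhere dense if there is $\eta\in{}^{\omega>}2$ such that for every $\nu\in{}^{\omega>}2$ there is $\varrho\in X$ with $\eta^\frown\nu\unlhd\varrho$. A filter $D$ on $\omega$ is nowhere dense if for every function $f\colon\omega\to{}^\omega 2$ there is $A\in D$ such that $f(A)$ is nowhere dense in the Cantor set ${}^\omega 2$. *)

(* Defs.v *)
From HB Require Import structures.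
From mathcomp Require Import all_boot all_order all_algebra.
From mathcomp Require Import all_classical all_reals all_analysis.
Set Implicit Arguments. Unset Strict Implicit. Unset Printing Implicit Defensive.
Local Open Scope classical_set_scope.

(* Finite 0-1 sequences are [seq bool]; eta ⊴ rho is [prefix eta rho];
   concatenation is [++].  The Cantor set ^omega 2 is mathcomp-analysis'
   [cantor_space] (bool^nat with the product topology). *)

Definition somewhere_dense (X : set (seq bool)) : Prop :=
  exists eta : seq bool, forall nu : seq bool,
    exists2 rho : seq bool, X rho & prefix (eta ++ nu) rho.

Definition nowhere_dense_set (A : set cantor_space) : Prop :=
  interior (closure A) = set0.

Definition nowhere_dense_filter (D : set (set nat)) : Prop :=
  forall f : nat -> cantor_space,
    exists2 A : set nat, D A & nowhere_dense_set (f @` A).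

(* Main.v *)
Require Import Defs.
From HB Require Import structures.
From mathcomp Require Import all_boot all_order all_algebra.
From mathcomp Require Import all_classical all_reals all_analysis.
Local Open Scope classical_set_scope.
From mathcomp Require Import zify.

Definition cyl (x : cantor_space) (n : nat) : set cantor_space :=
  [set y | forall i, (i < n)%N -> y i = x i].

Lemma cyl_nbhs (x : cantor_space) n : nbhs x (cyl x n).
Proof.
elim: n => [|n IH].
  by apply: filterS filterT => y _ i.
have H : nbhs x [set y : cantor_space | y n = x n].
  have := @proj_continuous nat (fun _ => bool) n x.
  move=> /(_ [set x n]) ; apply; exact: discrete_set1.
apply: filterS (filterI IH H) => y [Hy1 Hy2] i; rewrite ltnS leq_eqVlt.
by case/orP => [/eqP -> //|]; apply: Hy1.
Qed.

Lemma nbhs_cyl (x : cantor_space) U : nbhs x U -> exists n, cyl x n `<=` U.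
Proof.
move=> Ux; apply: contrapT => /forallNP H.
have H' : forall n, exists y : cantor_space, cyl x n y /\ ~ U y.
  by move=> n; have /existsNP [y /not_implyP Hy] := H n; exists y.
have [y Hy] := choice H'.
have yc : y @ \oo --> x.
  apply/cvg_sup => N V [W] [[Z] oZ <-] ZxN ZV.
  apply: (filterS ZV); rewrite nbhs_simpl; exists N.+1 => // k /= kN.
  by rewrite /= (proj1 (Hy k)).
have := yc U Ux => /= -[k _ Hk].
by apply: (proj2 (Hy k)); apply: (Hk k) => /=.
Qed.

Lemma prefix_nth (s t : seq bool) i : prefix s t -> (i < size s)%N ->
  nth false t i = nth false s i.
Proof. by case/prefixP => u ->; rewrite nth_cat => ->. Qed.

Lemma nth_prefix (s t : seq bool) : (size s <= size t)%N ->
  (forall i, (i < size s)%N -> nth false t i = nth false s i) -> prefix s t.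
Proof.
move=> st H; rewrite prefixE; apply/eqP; apply: (eq_from_nth (x0:=false)).
  by rewrite size_take; case: ltngtP st.
move=> i; rewrite size_take_min => hi.
have his : (i < size s)%N by move: hi; rewrite leq_min => /andP [].
by rewrite nth_take // H.
Qed.

Theorem mainTheorem3 (D : set (set nat)) (hD : ProperFilter D) :
  ~ nowhere_dense_filter D <->
  exists f : nat -> seq bool, forall B : set nat, D B -> somewhere_dense (f @` B).
Proof.
split.
- move=> Hn.
  have [f Hf] : exists f : nat -> cantor_space,
      forall A, D A -> ~ nowhere_dense_set (f @` A).
    apply: contrapT => H; apply: Hn => f; apply: contrapT => H2; apply: H.
    by exists f => A DA ndA; apply: H2; exists A.
  exists (fun n => mkseq (f n) n) => B DB.
  have [p] : exists p : cantor_space, nbhs p (closure (f @` B)).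
    apply: contrapT => Hc; apply: (Hf B DB); rewrite /nowhere_dense_set.
    by apply/seteqP; split => q // Hq; apply: Hc; exists q.
  move=> /nbhs_cyl [m Hm]; exists (mkseq p m) => nu.
  set s := mkseq p m ++ nu; set k := size s.
  set t := s ++ mkseq (fun i => ~~ f i (k + i)) k.
  pose z : cantor_space := fun i => nth false t i.
  have zs i : (i < k)%N -> z i = nth false s i.
    by move=> ik; rewrite /z /t nth_cat -/k ik.
  have zc : closure (f @` B) z.
    apply: Hm => i im; rewrite zs; last first.
      by rewrite /k /s size_cat size_mkseq; lia.
    by rewrite /s nth_cat size_mkseq im nth_mkseq.
  have [_ [[n Bn <-] Hfn]] := zc _ (cyl_nbhs z (k + k)).
  have kn : (k <= n)%N.
    rewrite leqNgt; apply/negP => nk.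
    have := Hfn (k + n); rewrite ltn_add2l => /(_ nk).
    rewrite /z /t nth_cat -/k ltnNge leq_addr /= addKn nth_mkseq //.
    by case: (f n (k + n)).
  exists (mkseq (f n) n); first by exists n.
  apply: nth_prefix; first by rewrite size_mkseq.
  move=> i ik; rewrite nth_mkseq; last by lia.
  by rewrite Hfn ?zs //; lia.
- case=> g Hg Hn.
  pose F : nat -> cantor_space := fun n i => nth false (g n) i.
  have [B DB ndB] := Hn F.
  have [eta Heta] := Hg B DB.
  pose p : cantor_space := fun i => nth false eta i.
  suff : interior (closure (F @` B)) p.
    by rewrite /nowhere_dense_set in ndB; rewrite ndB.
  apply: filterS (cyl_nbhs p (size eta)) => y Hy V /nbhs_cyl [m Hm].
  pose nu := mkseq (fun i => y (size eta + i)) m.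
  have [rho [n Bn <-] Hpre] := Heta nu.
  exists (F n); split; first by exists n.
  apply: Hm => i im.
  have hi : (i < size (eta ++ nu))%N by rewrite size_cat size_mkseq; lia.
  rewrite /F /= (@prefix_nth _ _ _ Hpre hi) nth_cat.
  case: ltnP => h; first by rewrite Hy.
  rewrite nth_mkseq; last by lia.
  by rewrite subnKC.
Qed.
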